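(* Let $\mathcal C\subseteq\mathbf F_q^n$ be a nonzero linear code of dimension $k$ and minimum distance $d$. Then $$s(\mathcal C)=\begin{cases}k & \text{if } 2d\ge n+2,\\ k-\min\{\Delta_{d-1},\dots,\Delta_{n-d+1}\} & \text{otherwise.}\end{cases}$$
   Context: The coordinate order of $\mathcal C$ is fixed. Define $\mathcal P_0=\mathcal F_n=0$, $\mathcal P_n=\mathcal F_0=\mathcal C$, and for $1\le i\le n-1$, $\mathcal P_i=\{(c_1,\dots,c_i):(c_1,\dots,c_i,0,\dots,0)\in\mathcal C\}$ and $\mathcal F_i=\{(c_{i+1},\dots,c_n):(0,\dots,0,c_{i+1},\dots,c_n)\in\mathcal C\}$. Put $\Delta_i=\dim\mathcal P_i+\dim\mathcal F_i$. The state complexity of $\mathcal C$ (that of its minimal trellis) is $s(\mathcal C)=k-\min_{0\le i\le n}\Delta_i$. *)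

(* Defs.v *)
From HB Require Import structures.
From mathcomp Require Import all_boot all_order all_algebra all_field.
Set Implicit Arguments. Unset Strict Implicit. Unset Printing Implicit Defensive.
Import GRing.Theory.
Local Open Scope ring_scope.

Section Codes.
Variables (F : finFieldType) (n : nat).

Definition wt (c : 'rV[F]_n) : nat := #|[set j : 'I_n | c 0 j != 0]|.

Definition prefix_mx (i : nat) : 'M[F]_(i, n) :=
  \matrix_(a < i, b < n) ((a : nat) == b)%:R.
Definition suffix_mx (i : nat) : 'M[F]_(n - i, n) :=
  \matrix_(a < n - i, b < n) ((b : nat) == i + a)%N%:R.

(* P_i = {(c_1..c_i) : (c_1..c_i,0..0) in C} as a subspace of F^i *)
Definition Pcode (C : {vspace 'rV[F]_n}) (i : nat) : {vspace 'rV[F]_i} :=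
  (linfun (mulmxr (prefix_mx i)) @^-1: C)%VS.
(* F_i = {(c_{i+1}..c_n) : (0..0,c_{i+1}..c_n) in C} as a subspace of F^(n-i) *)
Definition Fcode (C : {vspace 'rV[F]_n}) (i : nat) : {vspace 'rV[F]_(n - i)} :=
  (linfun (mulmxr (suffix_mx i)) @^-1: C)%VS.

Definition Delta (C : {vspace 'rV[F]_n}) (i : nat) : nat :=
  (\dim (Pcode C i) + \dim (Fcode C i))%N.

Definition state_complexity (C : {vspace 'rV[F]_n}) : nat :=
  (\dim C - \big[minn/Delta C 0]_(0 <= i < n.+1) Delta C i)%N.

End Codes.

(* Main.v *)
Require Import Defs.
From HB Require Import structures.
From mathcomp Require Import all_boot all_order all_algebra all_field.
From mathcomp Require Import zify.
Import GRing.Theory.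
Local Open Scope ring_scope.

Lemma bigminn_ge (r : seq nat) x0 (G : nat -> nat) m :
  (m <= x0)%N -> (forall i, i \in r -> m <= G i)%N ->
  (m <= \big[minn/x0]_(i <- r) G i)%N.
Proof.
move=> h0; elim: r => [|a r IH] H; first by rewrite big_nil.
rewrite big_cons leq_min H ?mem_head //= IH // => i hi.
by apply: H; rewrite in_cons hi orbT.
Qed.

Lemma bigminn_le (r : seq nat) x0 (G : nat -> nat) i :
  i \in r -> (\big[minn/x0]_(j <- r) G j <= G i)%N.
Proof.
elim: r => [|a r IH] //; rewrite in_cons big_cons => /orP [/eqP->|hi].
  exact: geq_minl.
exact: leq_trans (geq_minr _ _) (IH hi).
Qed.

Section S.
Variables (F : finFieldType) (n : nat).

Lemma prefix_lt m (y : 'rV[F]_m) (b : 'I_n) (hb : (b < m)%N) :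
  (y *m prefix_mx F n m) 0 b = y 0 (Ordinal hb).
Proof.
rewrite mxE (bigD1 (Ordinal hb)) //= mxE eqxx mulr1 big1 ?addr0 // => k hk.
rewrite mxE; case: eqP => [e|]; last by rewrite mulr0.
by case/eqP: hk; apply: val_inj.
Qed.

Lemma prefix_ge m (y : 'rV[F]_m) (b : 'I_n) : (m <= b)%N ->
  (y *m prefix_mx F n m) 0 b = 0.
Proof.
move=> hb; rewrite mxE big1 // => k _; rewrite mxE; case: eqP => [e|]; last by rewrite mulr0.
by move: (ltn_ord k); rewrite e ltnNge hb.
Qed.

Lemma suffix_ge m (y : 'rV[F]_(n - m)) (b : 'I_n) (h : (b - m < n - m)%N) :
  (m <= b)%N -> (y *m suffix_mx F n m) 0 b = y 0 (Ordinal h).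
Proof.
move=> hb; rewrite mxE (bigD1 (Ordinal h)) //= mxE subnKC // eqxx mulr1 big1 ?addr0 // => k hk.
rewrite mxE; case: eqP => [e|]; last by rewrite mulr0.
by case/eqP: hk; apply: val_inj => /=; rewrite e addKn.
Qed.

Lemma suffix_lt m (y : 'rV[F]_(n - m)) (b : 'I_n) : (b < m)%N ->
  (y *m suffix_mx F n m) 0 b = 0.
Proof.
move=> hb; rewrite mxE big1 // => k _; rewrite mxE; case: eqP => [e|]; last by rewrite mulr0.
by move: hb; rewrite e ltnNge leq_addr.
Qed.

Lemma prefix_inj m : (m <= n)%N -> injective (fun y : 'rV[F]_m => y *m prefix_mx F n m).
Proof.
move=> hm x y /= e; apply/rowP => a.
have ha : (a < n)%N by exact: leq_trans (ltn_ord a) hm.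
have := congr1 (fun M : 'rV_n => M 0 (Ordinal ha)) e => /=.
have E : forall z : 'rV[F]_m, (z *m prefix_mx F n m) 0 (Ordinal ha) = z 0 a.
  by move=> z; rewrite (@prefix_lt m z (Ordinal ha) (ltn_ord a)); congr (_ _ _); apply: val_inj.
by rewrite !E.
Qed.

Lemma suffix_inj m : injective (fun y : 'rV[F]_(n - m) => y *m suffix_mx F n m).
Proof.
move=> x y /= e; apply/rowP => a.
have ha : (m + a < n)%N by rewrite -ltn_subRL.
have h2 : (Ordinal ha - m < n - m)%N by rewrite /= addKn.
have := congr1 (fun M : 'rV_n => M 0 (Ordinal ha)) e => /=.
have E : forall z : 'rV[F]_(n - m), (z *m suffix_mx F n m) 0 (Ordinal ha) = z 0 a.
  move=> z; rewrite (@suffix_ge m z (Ordinal ha) h2) ?leq_addr //.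
  by congr (_ _ _); apply: val_inj; rewrite /= addKn.
by rewrite !E.
Qed.

End S.

Section V.
Variables (F : finFieldType) (n : nat) (C : {vspace 'rV[F]_n}).

Lemma dimP_le i j : (i <= j)%N -> (j <= n)%N -> (\dim (Pcode C i) <= \dim (Pcode C j))%N.
Proof.
move=> hij hjn.
rewrite /Pcode.
set f := linfun (mulmxr (prefix_mx F n i)).
set g := linfun (mulmxr (prefix_mx F n j)).
have injf : lker f == 0%VS.
  by apply/lker0P => x y; rewrite !lfunE /=; apply: prefix_inj; apply: leq_trans hjn.
rewrite -(limg_dim_eq (f := f)); last by rewrite (eqP injf) capv0.
apply: leq_trans (_ : \dim (g @: (g @^-1: C)) <= _)%N; last first.
  by rewrite -(limg_ker_dim g (g @^-1: C)) leq_addl.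
apply: dimvS; apply/subvP => w /memv_imgP [x hx ->].
set y := \row_(b < j) (f x) 0 (widen_ord hjn b).
have ey : g y = f x.
  apply/rowP => b; rewrite !lfunE /=.
  case: (ltnP b j) => hb.
    by rewrite (prefix_lt _ _ _ _ _ hb) mxE lfunE /=; congr (_ _ _); apply: val_inj.
  by rewrite !prefix_ge // (leq_trans hij hb).
by rewrite -ey; apply: memv_img; rewrite -memv_preim ey memv_preim.
Qed.

Lemma dimF_le i j : (i <= j)%N -> (\dim (Fcode C j) <= \dim (Fcode C i))%N.
Proof.
move=> hij.
rewrite /Fcode.
set f := linfun (mulmxr (suffix_mx F n j)).
set g := linfun (mulmxr (suffix_mx F n i)).
have injf : lker f == 0%VS.
  by apply/lker0P => x y; rewrite !lfunE /=; apply: suffix_inj.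
rewrite -(limg_dim_eq (f := f)); last by rewrite (eqP injf) capv0.
apply: leq_trans (_ : \dim (g @: (g @^-1: C)) <= _)%N; last first.
  by rewrite -(limg_ker_dim g (g @^-1: C)) leq_addl.
apply: dimvS; apply/subvP => w /memv_imgP [x hx ->].
have hi : forall b : 'I_(n - i), (i + b < n)%N by move=> b; rewrite -ltn_subRL.
set y := \row_(b < n - i) (f x) 0 (Ordinal (hi b)).
have ey : g y = f x.
  apply/rowP => b; rewrite !lfunE /=.
  case: (ltnP b i) => hb.
    by rewrite !suffix_lt // (leq_trans hb hij).
  have h2 : (b - i < n - i)%N by rewrite ltn_sub2r // (leq_ltn_trans hb).
  by rewrite (suffix_ge _ _ _ _ _ h2) // mxE lfunE /=; congr (_ _ _); apply: val_inj; rewrite /= subnKC.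
by rewrite -ey; apply: memv_img; rewrite -memv_preim ey memv_preim.
Qed.
End V.

Section W.
Variables (F : finFieldType) (n : nat) (C : {vspace 'rV[F]_n}).

Lemma wt_pre (c : 'rV[F]_n) i : (forall b : 'I_n, (i <= b)%N -> c 0 b = 0) -> (wt c <= i)%N.
Proof.
move=> H; rewrite /wt cardE -(size_map val).
apply: (@leq_trans (size (iota 0 i))); last by rewrite size_iota.
apply: uniq_leq_size; first by rewrite map_inj_uniq ?enum_uniq //; exact: val_inj.
move=> x /mapP [j]; rewrite mem_enum inE => hj ->; rewrite mem_iota /= add0n.
by case: ltnP => // h; rewrite H // eqxx in hj.
Qed.

Lemma wt_suf (c : 'rV[F]_n) i : (forall b : 'I_n, (b < i)%N -> c 0 b = 0) -> (wt c <= n - i)%N.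
Proof.
move=> H; rewrite /wt cardE -(size_map val).
apply: (@leq_trans (size (iota i (n - i)))); last by rewrite size_iota.
apply: uniq_leq_size; first by rewrite map_inj_uniq ?enum_uniq //; exact: val_inj.
move=> x /mapP [j]; rewrite mem_enum inE => hj ->; rewrite mem_iota /=.
case: (ltnP j i) => h; first by rewrite H // eqxx in hj.
have := ltn_ord j; move: h; lia.
Qed.

Variable d : nat.
Hypothesis hmin : forall c, c \in C -> c != 0 -> (d <= wt c)%N.

Lemma P0 i : (i < d)%N -> (i <= n)%N -> \dim (Pcode C i) = 0%N.
Proof.
move=> hid hin; apply/eqP; rewrite dimv_eq0 -subv0; apply/subvP => x hx.
rewrite memv0; apply/negPn/negP => hx0.
rewrite /Pcode -memv_preim lfunE /= in hx.
have hc0 : x *m prefix_mx F n i != 0.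
  apply: contra hx0 => /eqP e; apply/eqP; apply: (@prefix_inj F n i hin); by rewrite /= e mul0mx.
have := hmin _ hx hc0; rewrite leqNgt; apply/negP/negPn.
apply: leq_ltn_trans hid; apply: wt_pre => b hb; exact: prefix_ge.
Qed.

Lemma F0 i : (n - i < d)%N -> \dim (Fcode C i) = 0%N.
Proof.
move=> hid; apply/eqP; rewrite dimv_eq0 -subv0; apply/subvP => x hx.
rewrite memv0; apply/negPn/negP => hx0.
rewrite /Fcode -memv_preim lfunE /= in hx.
have hc0 : x *m suffix_mx F n i != 0.
  apply: contra hx0 => /eqP e; apply/eqP; apply: (@suffix_inj F n i); by rewrite /= e mul0mx.
have := hmin _ hx hc0; rewrite leqNgt; apply/negP/negPn.
apply: leq_ltn_trans hid; apply: wt_suf => b hb; exact: suffix_lt.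
Qed.
End W.

Theorem proposition2p3 (F : finFieldType) (n : nat) (C : {vspace 'rV[F]_n})
    (d : nat) :
  C != 0%VS ->
  (exists2 c, c \in C & (c != 0) && (wt c == d)) ->
  (forall c, c \in C -> c != 0 -> (d <= wt c)%N) ->
  state_complexity C =
    (if (n + 2 <= 2 * d)%N then \dim C
     else (\dim C - \big[minn/Delta C d.-1]_(d.-1 <= i < (n - d + 1).+1)
                                Delta C i)%N).
Proof.
move=> _ [c hcC /andP [hc0 /eqP hwt]] hmin.
have hdn : (d <= n)%N.
  by rewrite -hwt /wt; apply: leq_trans (max_card _) _; rewrite card_ord.
have hd0 : (0 < d)%N.
  rewrite -hwt lt0n; apply: contra hc0; rewrite /wt cards_eq0 => /eqP eA.
  apply/eqP/rowP => j; rewrite mxE.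
  have := in_set0 j; rewrite -eA inE => /negbFE /eqP; done.
have DL : forall i, (i <= d.-1)%N -> Delta C i = \dim (Fcode C i).
  by move=> i hi; rewrite /Delta (@P0 _ _ _ _ hmin) //; lia.
have DH : forall i, (n - d + 1 <= i)%N -> Delta C i = \dim (Pcode C i).
  by move=> i hi; rewrite /Delta (@F0 _ _ _ _ hmin) ?addn0 //; lia.
rewrite /state_complexity; case: ifP => h2d.
  suff -> : \big[minn/Delta C 0]_(0 <= i < n.+1) Delta C i = 0%N by rewrite subn0.
  apply/eqP; rewrite -leqn0; apply: leq_trans (bigminn_le _ _ _ (d.-1) _) _.
    by rewrite mem_index_iota; lia.
  by rewrite DL // (@F0 _ _ _ _ hmin) //; lia.
congr (_ - _)%N; apply/eqP; rewrite eqn_leq; apply/andP; split.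
  apply: bigminn_ge => [|i]; last rewrite mem_index_iota => hi.
    by apply: bigminn_le; rewrite mem_index_iota; lia.
  by apply: bigminn_le; rewrite mem_index_iota; lia.
have key : forall i, (i <= n)%N ->
    (\big[minn/Delta C d.-1]_(d.-1 <= i < (n - d + 1).+1) Delta C i <= Delta C i)%N.
  move=> i hin.
  case: (ltnP i d.-1) => h1.
    apply: leq_trans (bigminn_le _ _ _ (d.-1) _) _.
      by rewrite mem_index_iota; lia.
    rewrite !DL //; last by lia.
    by apply: dimF_le; lia.
  case: (ltnP (n - d + 1) i) => h3.
    apply: leq_trans (bigminn_le _ _ _ (n - d + 1)%N _) _.
      by rewrite mem_index_iota; lia.
    rewrite !DH //; last by lia.
    by apply: dimP_le => //; lia.
  by apply: bigminn_le; rewrite mem_index_iota; lia.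
apply: bigminn_ge => [|i]; first exact: key.
by rewrite mem_index_iota => hi; apply: key; lia.
Qed.
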